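(* Let $A\in M_n$ and $c\in\mathbb{R}^n$. If $\alpha$ is a sharp point of $W_c(A)$, then $\alpha$ is a $c$-value of $A$.
   Context: $M_n$ denotes the space of $n\times n$ complex matrices. The $c$-numerical range of $A\in M_n$ is $W_c(A)=\{\sum_{j=1}^n c_jx_j^*Ax_j:\ x_1,\dots,x_n\in\mathbb{C}^n\text{ orthonormal}\}$, a compact convex set. A sharp point of $W_c(A)$ is a point $\alpha\in\partial W_c(A)$ through which pass at least two distinct supporting lines of $W_c(A)$. Let $\lambda_1(A),\dots,\lambda_n(A)$ be the eigenvalues of $A$ with algebraic multiplicity and $i_1<\dots<i_r$ the indices with $c_{i_s}\neq0$. A $c$-value of $A$ is a number $\sum_{s=1}^r c_{i_s}\lambda_{j_s}(A)$ with $j_1,\dots,j_r\in\{1,\dots,n\}$ pairwise distinct. *)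

(* Defs.v *)
(* Complex matrices: entries in an arbitrary
   numClosedFieldType C (e.g. algC). *)
From HB Require Import structures.
From mathcomp Require Import all_boot all_order all_algebra.
Set Implicit Arguments. Unset Strict Implicit. Unset Printing Implicit Defensive.
Import Order.TTheory GRing.Theory Num.Theory.
Local Open Scope ring_scope.
Local Open Scope sesquilinear_scope.

Section CNR.
Context {C : numClosedFieldType} {n : nat}.

Definition quadf (A : 'M[C]_n) (x : 'rV[C]_n) : C :=
  ((map_mx Num.conj x) *m A *m x^T) 0 0.

(* An orthonormal family x_1..x_n of C^n = the rows of a unitary matrix. *)
Definition orthonormal_family (X : 'M[C]_n) : Prop := X \is unitarymx.

Definition in_cnr (c : 'rV[C]_n) (A : 'M[C]_n) (z : C) : Prop :=
  exists X : 'M[C]_n, orthonormal_family X /\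
    z = \sum_(j < n) c 0 j * quadf A (row j X).

Definition supporting_line_at (c : 'rV[C]_n) (A : 'M[C]_n) (alpha u : C) : Prop :=
  `|u| = 1 /\ forall z, in_cnr c A z -> 'Re (Num.conj u * (z - alpha)) <= 0.

(* alpha is a boundary point of W_c(A) through which pass at least two
   distinct supporting lines (lines with unit normals u1, u2 coincide
   iff u1 = u2 or u1 = - u2). *)
Definition sharp_point (c : 'rV[C]_n) (A : 'M[C]_n) (alpha : C) : Prop :=
  in_cnr c A alpha /\
  exists u1 u2 : C, [/\ u1 != u2, u1 != - u2,
                       supporting_line_at c A alpha u1 &
                       supporting_line_at c A alpha u2].

(* c-value: sum_{s} c_{i_s} lambda_{j_s}, over the indices i with c_i != 0,
   j injective on those indices; lam = eigenvalues with algebraic multiplicity. *)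
Definition c_value (c : 'rV[C]_n) (A : 'M[C]_n) (alpha : C) : Prop :=
  exists lam : seq C,
    [/\ size lam = n,
        char_poly A = \prod_(l <- lam) ('X - l%:P) &
        exists j : 'I_n -> 'I_n,
          {in [pred i | c 0 i != 0] &, injective j} /\
          alpha = \sum_(i < n | c 0 i != 0) c 0 i * lam`_(j i)].

End CNR.

(* Main.v *)
Require Import Defs.
From HB Require Import structures.
From mathcomp Require Import all_boot all_order all_algebra perm.
From mathcomp Require Import ring.
Set Implicit Arguments. Unset Strict Implicit. Unset Printing Implicit Defensive.
Import Order.TTheory GRing.Theory Num.Theory.
Local Open Scope ring_scope.
Local Open Scope sesquilinear_scope.

Section Scal.
Context {C : numClosedFieldType}.

Lemma re0_rot (u z : C) : `|u| = 1 -> 'Re (u^* * z) = 0 -> z = - u ^+ 2 * z^*.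
Proof.
move=> nu; rewrite ReE => /eqP; rewrite mulf_eq0 invr_eq0 pnatr_eq0 orbF.
rewrite rmorphM /= conjCK => /eqP h.
have uu : u * u^* = 1 by rewrite -normCK nu expr1n.
transitivity (u * (u^* * z)); first by rewrite mulrA uu mul1r.
have -> : u^* * z = - (u * z^*) by apply/eqP; rewrite -addr_eq0 h.
ring.
Qed.

Lemma two_lines (u1 u2 z : C) : `|u1| = 1 -> `|u2| = 1 -> u1 != u2 ->
  u1 != - u2 -> 'Re (u1^* * z) = 0 -> 'Re (u2^* * z) = 0 -> z = 0.
Proof.
move=> n1 n2 d1 d2 h1 h2.
have e1 := re0_rot n1 h1; have e2 := re0_rot n2 h2.
have : (u1 - u2) * (u1 + u2) * z^* = 0.
  have -> : (u1 - u2) * (u1 + u2) * z^* = (- u2 ^+ 2 * z^*) - (- u1 ^+ 2 * z^*)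
    by ring.
  by rewrite -e1 -e2 subrr.
move/eqP; rewrite !mulf_eq0 subr_eq0 (negPf d1) /= addr_eq0 (negPf d2) /= conjC_eq0.
by move/eqP.
Qed.

Lemma lin_zero (r1 r2 r3 r4 : C) : r1 \is Num.real -> r2 \is Num.real ->
  r3 \is Num.real -> r4 \is Num.real ->
  (forall t : C, t \is Num.real ->
     t * r1 + t ^+ 2 * r2 + t ^+ 3 * r3 + t ^+ 4 * r4 <= 0) -> r1 = 0.
Proof.
move=> R1 R2 R3 R4 H; apply/eqP/negP => nz.
pose K := 1 + `|r1| + `|r2| + `|r3| + `|r4|.
have Kge : forall x : C, `|x| <= `|x| by [].
have K1 : 1 <= K by rewrite /K -!addrA lerDl !addr_ge0.
have Kp : 0 < K by apply: lt_le_trans K1.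
have K0 : K != 0 by rewrite gt_eqF.
have KR : K \is Num.real by apply: gtr0_real.
pose t := r1 / (2 * K).
have tR : t \is Num.real by rewrite rpredM ?rpredV ?rpredM ?rpred_nat.
have r1K : `|r1| <= K.
  by rewrite /K -!addrA addrCA lerDl addr_ge0 // !addr_ge0.
have tn : `|t| <= 1.
  rewrite normrM normfV normrM (ger0_norm (ltW Kp)) normr_nat.
  rewrite ler_pdivrMr ?mulr_gt0 // mul1r.
  by apply: (le_trans r1K); rewrite mulr_natl mulr2n lerDr ltW.
pose w := r2 + t * r3 + t ^+ 2 * r4.
have wR : w \is Num.real.
 exact: (rpredD (rpredD R2 (rpredM tR R3)) (rpredM (rpredX _ tR) R4)).
have wK : `|w| <= K.
  apply: (le_trans (ler_normD _ _)).
  apply: (@le_trans _ _ (`|r2| + `|r3| + `|r4|)); last first.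
    by rewrite /K -!addrA; do 2!apply: ler_wpDl => //.
  apply: lerD; last first.
    by rewrite normrM -[X in _ <= X]mul1r ler_wpM2r // normrX exprn_ile1.
  apply: (le_trans (ler_normD _ _)); apply: lerD => //.
  by rewrite normrM -[X in _ <= X]mul1r ler_wpM2r.
have Kw : 0 <= K + w.
  by move: wK; rewrite real_ler_norml // => /andP[+ _]; rewrite -subr_ge0 opprK addrC.
have t2 : 0 <= t ^+ 2 by rewrite -real_normK // exprn_ge0.
have r1sq : 0 < r1 ^+ 2.
  by rewrite -real_normK // exprn_gt0 // normr_gt0; apply/negP.
have := H t tR.
have -> : t * r1 + t ^+ 2 * r2 + t ^+ 3 * r3 + t ^+ 4 * r4 =
          r1 ^+ 2 / (4%:R * K) + t ^+ 2 * (K + w).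
  rewrite /w /t; field; by rewrite K0 /= ?pnatr_eq0.
move=> hle; suff hpos : 0 < r1 ^+ 2 / (4%:R * K) + t ^+ 2 * (K + w).
  by have := lt_le_trans hpos hle; rewrite ltxx.
apply: ltr_pwDl; last exact: mulr_ge0.
by rewrite divr_gt0 // mulr_gt0 // ltr0n.
Qed.

End Scal.

Section Mx.
Context {C : numClosedFieldType} {n : nat}.
Variables (p q : 'I_n) (w : C).
Hypothesis pq : p != q.
Hypothesis ww : w * w^* = 1.

Definition E0 : 'M[C]_n := delta_mx p p + delta_mx q q.
Definition E1 : 'M[C]_n := w *: delta_mx q p - w^* *: delta_mx p q.

Let dm := mul_delta_mx_cond.
Let qp : q != p. Proof. by rewrite eq_sym. Qed.

Lemma E00 : E0 *m E0 = E0.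
Proof.
by rewrite /E0 mulmxDl !mulmxDr !dm !eqxx (negPf pq) (negPf qp) !mulr0n !mulr1n
  addr0 ?add0r.


Qed.

Lemma E01 : E0 *m E1 = E1.
Proof.
rewrite /E0 /E1 mulmxDl !mulmxBr -!scalemxAr !dm !eqxx (negPf pq) (negPf qp).
by rewrite !mulr0n !mulr1n !scaler0 ?subr0 ?sub0r ?add0r ?addr0 addrC.
Qed.

Lemma E10 : E1 *m E0 = E1.
Proof.
rewrite /E0 /E1 mulmxBl !mulmxDr -!scalemxAl !dm !eqxx (negPf pq) (negPf qp).
by rewrite !mulr0n !mulr1n !scaler0 ?addr0 ?add0r ?subr0 ?sub0r.
Qed.

Lemma E11 : E1 *m E1 = - E0.
Proof.
rewrite /E0 /E1 mulmxBl !mulmxBr -!scalemxAl -!scalemxAr !dm !eqxx.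
rewrite (negPf pq) (negPf qp) !mulr0n !mulr1n !scaler0 !scalerA.
rewrite [w^* * w]mulrC ww !scale1r sub0r subr0 opprD addrC.
by [].
Qed.


Definition Wm x y : 'M[C]_n := 1%:M + y *: E0 + x *: E1.
Definition Wp x y : 'M[C]_n := 1%:M + y *: E0 - x *: E1.

Lemma E0adj : E0 ^t* = E0.
Proof. by rewrite /E0 raddfD /= !trmx_delta map_mxD !map_delta_mx addrC. Qed.

Lemma E1adj : E1 ^t* = - E1.
Proof.
rewrite /E1 raddfB /= !linearZ /= !trmx_delta map_mxD !map_mxZ map_mxN !map_delta_mx /=.
by rewrite conjCK !scalerN opprD opprK addrC.
Qed.

Lemma adj_comb (P Q : 'M[C]_n) x y : x \is Num.real -> y \is Num.real ->
  (1%:M + y *: P + x *: Q) ^t* = 1%:M + y *: P ^t* + x *: Q ^t*.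
Proof.
move=> xR yR; apply/matrixP => i j; rewrite !mxE !rmorphD !rmorphM /=.
by rewrite (conj_Creal xR) (conj_Creal yR) rmorphMn /= conjC1 eq_sym.
Qed.

Lemma Wadj x y : x \is Num.real -> y \is Num.real -> (Wm x y) ^t* = Wp x y.
Proof.
by move=> xR yR; rewrite /Wm adj_comb // E0adj E1adj scalerN.
Qed.

Lemma Wunit x y : (1 + y) ^+ 2 + x ^+ 2 = 1 -> Wm x y *m Wp x y = 1%:M.
Proof.
move=> h.
have h0 : Wm x y *m E0 = E0 + y *: E0 + x *: E1.
  by rewrite /Wm !mulmxDl mul1mx -!scalemxAl E00 E10.
have h1 : Wm x y *m E1 = E1 + y *: E1 + x *: (- E0).
  by rewrite /Wm !mulmxDl mul1mx -!scalemxAl E01 E11.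
rewrite /Wp mulmxBr mulmxDr mulmx1 -!scalemxAr h0 h1 /Wm.
apply/matrixP => i j; rewrite !mxE.
apply/eqP; rewrite -subr_eq0; apply/eqP.
transitivity (((1 + y) ^+ 2 + x ^+ 2 - 1) * E0 i j); first (rewrite /Wm !mxE; ring).
by rewrite h subrr mul0r.
Qed.


Lemma trexp_gen (D B P Q : 'M[C]_n) x y :
  \tr (D *m ((1%:M + y *: P + x *: Q) *m B *m (1%:M + y *: P - x *: Q))) =
  \tr (D *m B)
  + x * (\tr (D *m Q *m B) - \tr (D *m B *m Q))
  + y * (\tr (D *m P *m B) + \tr (D *m B *m P))
  + x ^+ 2 * (- \tr (D *m Q *m B *m Q))
  + x * y * (\tr (D *m Q *m B *m P) - \tr (D *m P *m B *m Q))
  + y ^+ 2 * \tr (D *m P *m B *m P).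
Proof.
rewrite -scaleNr.
do ![rewrite mulmxDl | rewrite mulmxDr].
rewrite !mul1mx !mulmx1.
do ![rewrite -scalemxAl | rewrite -scalemxAr].
do ![rewrite mxtraceD | rewrite mxtraceZ].
rewrite !mulmxA.
ring.
Qed.


Lemma trdiagE (c : 'rV[C]_n) (M : 'M[C]_n) :
  \tr (diag_mx c *m M) = \sum_j c 0 j * M j j.
Proof. by rewrite mul_diag_mx /mxtrace; apply: eq_bigr => j _; rewrite mxE. Qed.

Lemma trDdB (c : 'rV[C]_n) (B : 'M[C]_n) i j :
  \tr (diag_mx c *m delta_mx i j *m B) = c 0 i * B j i.
Proof.
rewrite -mulmxA trdiagE (bigD1 i) //= big1 => [|k ki].
  rewrite addr0 mxE (bigD1 j) //= big1 => [|l lj]; first by rewrite !mxE !eqxx mul1r addr0.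
  by rewrite !mxE (negPf lj) andbF mul0r.
rewrite mxE big1 ?mulr0 // => l _; by rewrite !mxE (negPf ki) mul0r.
Qed.

Lemma trDBd (c : 'rV[C]_n) (B : 'M[C]_n) i j :
  \tr (diag_mx c *m B *m delta_mx i j) = c 0 j * B j i.
Proof.
rewrite -mulmxA trdiagE (bigD1 j) //= big1 => [|k kj].
  rewrite addr0 mxE (bigD1 i) //= big1 => [|l li]; first by rewrite !mxE !eqxx mulr1 addr0.
  by rewrite !mxE (negPf li) mulr0.
rewrite mxE big1 ?mulr0 // => l _; by rewrite !mxE (negPf kj) andbF mulr0.
Qed.

Lemma L1E (c : 'rV[C]_n) (B : 'M[C]_n) :
  \tr (diag_mx c *m E1 *m B) - \tr (diag_mx c *m B *m E1) =
  (c 0 q - c 0 p) * (w * B p q + w^* * B q p).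
Proof.
rewrite /E1 -scaleNr.
rewrite mulmxDr mulmxDl !mulmxDr -!scalemxAr -!scalemxAl !mxtraceD !mxtraceZ.
rewrite !trDdB !trDBd; ring.
Qed.

End Mx.

Section An.
Context {C : numClosedFieldType} {n : nat}.

Lemma quadfE (A Y : 'M[C]_n) j : quadf A (row j Y) = (map_mx Num.conj Y *m A *m Y^T) j j.
Proof.
rewrite /quadf !mxE; apply: eq_bigr => l _; rewrite !mxE; congr (_ * _).
by apply: eq_bigr => k _; rewrite !mxE.
Qed.

Lemma valueE (c : 'rV[C]_n) (A Y : 'M[C]_n) : \sum_(j < n) c 0 j * quadf A (row j Y) =
  \tr (diag_mx c *m (map_mx Num.conj Y *m A *m Y^T)).
Proof. by rewrite trdiagE; apply: eq_bigr => j _; rewrite quadfE. Qed.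

Lemma perturb (c : 'rV[C]_n) (A X W : 'M[C]_n) : X \is unitarymx ->
  W \is unitarymx ->
  in_cnr c A (\tr (diag_mx c *m (W *m (map_mx Num.conj X *m A *m X^T) *m W ^t* ))).
Proof.
move=> uX uW; exists (map_mx Num.conj W *m X); split.
  by rewrite /orthonormal_family mul_unitarymx // conjC_unitary.
rewrite valueE map_mxM.
have -> : map_mx Num.conj (map_mx Num.conj W) = W.
  by apply/matrixP => i j; rewrite !mxE conjCK.
by rewrite trmx_mul map_trmx !mulmxA.
Qed.

Lemma ReD (a b : C) : 'Re (a + b) = 'Re a + 'Re b.
Proof. rewrite !ReE rmorphD /=; ring. Qed.


Lemma key (c : 'rV[C]_n) (A X : 'M[C]_n) (u alpha : C) (p q : 'I_n) (w : C) :
  X \is unitarymx ->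
  alpha = \tr (diag_mx c *m (map_mx Num.conj X *m A *m X^T)) ->
  supporting_line_at c A alpha u -> p != q -> w * w^* = 1 ->
  'Re (u^* * ((c 0 q - c 0 p) * (w * (map_mx Num.conj X *m A *m X^T) p q
        + w^* * (map_mx Num.conj X *m A *m X^T) q p))) = 0.
Proof.
move=> uX ha [_ hsup] pq ww.
set B := map_mx Num.conj X *m A *m X^T.
set D := diag_mx c.
pose P : 'M[C]_n := E0 p q; pose Q : 'M[C]_n := E1 p q w.
rewrite -(L1E p q w c B) -/D -/Q.
set L1 := \tr (D *m Q *m B) - \tr (D *m B *m Q).
set L0 := \tr (D *m P *m B) + \tr (D *m B *m P).
set M11 := - \tr (D *m Q *m B *m Q).
set M10 := \tr (D *m Q *m B *m P) - \tr (D *m P *m B *m Q).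
set M00 := \tr (D *m P *m B *m P).
suff : 'Re (u^* * (2%:R * L1)) = 0.
  rewrite mulrCA (ReMl (rpred_nat _ 2)) => /eqP.
  by rewrite mulf_eq0 pnatr_eq0 /= => /eqP.
set k2 := - 2%:R * L0 + 4%:R * M11.
set k3 := 2%:R * L1 - 4%:R * M10.
set k4 := - 2%:R * L0 + 4%:R * M00.
apply: (@lin_zero _ _ ('Re (u^* * k2)) ('Re (u^* * k3)) ('Re (u^* * k4)));
  try exact: Creal_Re.
move=> t tR.
pose s := 1 + t ^+ 2.
have t2 : 0 <= t ^+ 2 by rewrite -real_normK // exprn_ge0.
have sp : 0 < s by rewrite /s ltr_wpDr.
have s0 : s != 0 by rewrite gt_eqF.
have sR : s \is Num.real by apply: gtr0_real.
pose x := 2%:R * t / s; pose y := - (2%:R * t ^+ 2) / s.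
have xR : x \is Num.real by rewrite /x rpredM ?rpredV ?rpredM ?rpred_nat.
have yR : y \is Num.real by rewrite /y rpredM ?rpredV ?rpredN ?rpredM ?rpredX ?rpred_nat.
have hxy : (1 + y) ^+ 2 + x ^+ 2 = 1 by rewrite /x /y /s; field; exact: s0.
have Wu : Wm p q w x y \is unitarymx.
  by apply/unitarymxP; rewrite Wadj // Wunit.
have := hsup _ (perturb c A uX Wu).
rewrite Wadj // /Wm /Wp -/P -/Q -/B -/D trexp_gen -/L1 -/L0 -/M11 -/M10 -/M00.
rewrite -ha.
move=> hle.
have e1 : s ^+ 2 * (u^* * (alpha + x * L1 + y * L0 + x ^+ 2 * M11 + x * y * M10
   + y ^+ 2 * M00 - alpha)) = t * (u^* * (2%:R * L1)) + t ^+ 2 * (u^* * k2)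
   + t ^+ 3 * (u^* * k3) + t ^+ 4 * (u^* * k4).
  by rewrite /x /y /k2 /k3 /k4 /s; field; exact: s0.
have -> : t * 'Re (u^* * (2%:R * L1)) + t ^+ 2 * 'Re (u^* * k2) +
   t ^+ 3 * 'Re (u^* * k3) + t ^+ 4 * 'Re (u^* * k4) =
   s ^+ 2 * 'Re (u^* * (alpha + x * L1 + y * L0 + x ^+ 2 * M11 + x * y * M10
   + y ^+ 2 * M00 - alpha)).
  rewrite -(ReMl (rpredX 2 sR)) e1 !ReD (ReMl tR) !(ReMl (rpredX _ tR)).
  by [].
by apply: mulr_ge0_le0; [rewrite exprn_ge0 // ltW | exact: hle].
Qed.

End An.

Section Fin.
Context {C : numClosedFieldType} {n : nat}.

Lemma char_poly_sim (P M : 'M[C]_n) : P \in unitmx ->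
  char_poly (P *m M *m invmx P) = char_poly M.
Proof.
move=> uP; rewrite /char_poly /char_poly_mx.
set P' := map_mx polyC P; set Q' := map_mx polyC (invmx P).
have PQ : P' *m Q' = 1%:M by rewrite -map_mxM mulmxV // map_mx1.
have -> : 'X%:M - map_mx polyC (P *m M *m invmx P) =
          P' *m ('X%:M - map_mx polyC M) *m Q'.
  rewrite !map_mxM -/P' -/Q' mulmxBr mulmxBl mul_mx_scalar -scalemxAl PQ.
  by rewrite scalemx1.
by rewrite !det_mulmx mulrC mulrA -det_mulmx (mulmx1C PQ) det1 mul1r.
Qed.



Lemma commDB (c : 'rV[C]_n) (A X : 'M[C]_n) (alpha : C) :
  X \is unitarymx ->
  alpha = \tr (diag_mx c *m (map_mx Num.conj X *m A *m X^T)) ->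
  (exists u1 u2 : C, [/\ u1 != u2, u1 != - u2,
      supporting_line_at c A alpha u1 & supporting_line_at c A alpha u2]) ->
  diag_mx c *m (map_mx Num.conj X *m A *m X^T) =
  (map_mx Num.conj X *m A *m X^T) *m diag_mx c.
Proof.
move=> uX ha [u1 [u2 [d1 d2 s1 s2]]].
set B := map_mx Num.conj X *m A *m X^T.
apply/matrixP => p q; rewrite mul_diag_mx mul_mx_diag [LHS]mxE [RHS]mxE.
have [->|pq] := eqVneq p q; first by rewrite mulrC.
have [->|cpq] := eqVneq (c 0 p) (c 0 q); first by rewrite mulrC.
suff -> : B p q = 0 by rewrite mulr0 mul0r.
have w1 : (1 : C) * 1^* = 1 by rewrite conjC1 mulr1.
have wi : 'i * 'i^* = 1 :> C by rewrite -normCK normCi expr1n.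
have z1 := two_lines s1.1 s2.1 d1 d2 (key uX ha s1 pq w1) (key uX ha s2 pq w1).
have z2 := two_lines s1.1 s2.1 d1 d2 (key uX ha s1 pq wi) (key uX ha s2 pq wi).
have cqp : c 0 q - c 0 p != 0 by rewrite subr_eq0 eq_sym.
move: z1 => /eqP; rewrite mulf_eq0 (negPf cqp) /= conjC1 !mul1r => /eqP h1.
move: z2 => /eqP; rewrite mulf_eq0 (negPf cqp) /= conjCi => /eqP h2.
have : 2%:R * 'i * B p q = 0.
  transitivity ('i * B p q + - 'i * B q p + 'i * (B p q + B q p)); first by ring.
  by rewrite h1 h2 mulr0 addr0.
by move/eqP; rewrite !mulf_eq0 pnatr_eq0 (negPf (neq0Ci C)) /= => /eqP.
Qed.


Lemma tr_trig (M N : 'M[C]_n) : is_trig_mx M -> is_trig_mx N ->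
  \tr (M *m N) = \sum_k M k k * N k k.
Proof.
move=> /is_trig_mxP hM /is_trig_mxP hN; rewrite /mxtrace; apply: eq_bigr => k _.
rewrite mxE (bigD1 k) //= big1 ?addr0 // => l lk.
case: (ltngtP k l) => [kl|lk'|e]; first by rewrite hM ?mul0r.
  by rewrite hN ?mulr0.
by move: lk; rewrite -(inj_eq val_inj) /= e eqxx.
Qed.

Lemma unit_sim (P M : 'M[C]_n) : P \is unitarymx ->
  char_poly (P *m M *m P^t* ) = char_poly M.
Proof.
by move=> uP; rewrite -invmx_unitary // char_poly_sim // unitarymx_unit.
Qed.

Lemma prod_ord_seq (f : 'I_n -> C) :
  \prod_(k < n) ('X - (f k)%:P) = \prod_(x <- [seq f k | k <- enum 'I_n]) ('X - x%:P).
Proof. by rewrite big_map big_enum. Qed.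

End Fin.

Theorem mainTheorem16 (C : numClosedFieldType) (n : nat)
    (A : 'M[C]_n) (c : 'rV[C]_n) (hc : forall i, c 0 i \is Num.real)
    (alpha : C) :
  sharp_point c A alpha -> c_value c A alpha.
Proof.
move=> [[X [uX hX]] hs].
rewrite valueE in hX.
set B := map_mx Num.conj X *m A *m X^T in hX.
set D := diag_mx c in hX.
have DB := commDB uX hX hs.
have [P uP /andP[tD tB]] := cotrigonalization2 DB.
rewrite /similar_to /= !conjymx // in tD tB.
set D' := P *m D *m P^t* in tD.
set B' := P *m B *m P^t* in tB.
have PtP : P^t* *m P = 1%:M.
  by rewrite -[P^t* *m P]mul1mx mulmxA mulmxKtV.
have ha : alpha = \sum_k D' k k * B' k k.
  rewrite -tr_trig // hX.
  have -> : D' *m B' = P *m (D *m B) *m P^t*.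
    by rewrite /D' /B' !mulmxA mulmxKtV.
  by rewrite [RHS]mxtrace_mulC !mulmxA PtP mul1mx.
have cD : char_poly D' = \prod_(x <- [seq c 0 k | k <- enum 'I_n]) ('X - x%:P).
  rewrite unit_sim // char_poly_trig ?is_diag_mx_is_trig ?diag_mx_is_diag //.
  rewrite -prod_ord_seq; apply: eq_bigr => k _; by rewrite /D mxE eqxx mulr1n.
have cD2 : char_poly D' = \prod_(x <- [seq D' k k | k <- enum 'I_n]) ('X - x%:P).
  by rewrite char_poly_trig // prod_ord_seq.
have hperm := prod_XsubC_eq (etrans (esym cD2) cD).
have : perm_eq [seq D' k k | k <- enum 'I_n] [tuple c 0 k | k < n].
  exact: hperm.
case/tuple_permP => s hs'.
have Ds : forall k, D' k k = c 0 (s k).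
  move=> k; have := congr1 (fun r => nth 0 r k) hs'.
  rewrite /= (nth_map k) ?size_enum_ord // nth_ord_enum => ->.
  by rewrite (nth_map k) ?size_enum_ord // nth_ord_enum tnth_mktuple.
have XT : X^T = (map_mx Num.conj X)^t*.
  by apply/matrixP => i j; rewrite !mxE conjCK.
have cA : char_poly A = char_poly B'.
  by rewrite /B' unit_sim // /B XT unit_sim // conjC_unitary.
exists [seq B' k k | k <- enum 'I_n]; split.
- by rewrite size_map size_enum_ord.
- by rewrite cA char_poly_trig // prod_ord_seq.
exists (fun i => (s^-1)%g i); split; first by move=> i j _ _; apply: perm_inj.
rewrite ha [RHS](reindex_inj (@perm_inj _ s)) /= [RHS]big_mkcond /=.

apply: eq_bigr => k _; rewrite permK (nth_map k) ?size_enum_ord // nth_ord_enum Ds.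
by case: eqP => [->|_]; rewrite ?mul0r.
Qed.
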